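(* Let $G$ be a graph. (1) If $n\geq 3$, then no two distinct vertices of $\uparrow^{n}G$ are strongly cospectral (with respect to the Laplacian). (2) Let $n=2$ and let $u$ be a vertex of $G$ with degree $d_u$. Then the vertices $(0,u)$ and $(1,u)$ are strongly cospectral in $\uparrow^{2}G$ if and only if $d_u\notin\sigma_u(G)$, in which case $$\sigma_{(0,u),(1,u)}^+(\uparrow^{2}G)=2\cdot \sigma_{u}(G)\quad \text{and}\quad \sigma_{(0,u),(1,u)}^-(\uparrow^{2}G)=\{2d_u\}.$$ Moreover, in $\uparrow^{2}G$ the vertex $(0,u)$ can be strongly cospectral only with $(1,u)$.
   Context: All graphs are simple, undirected and unweighted; $L=D-A$ is the Laplacian matrix of a graph, $d_u$ the degree of $u$. For a graph $X$, $\sigma(X)$ is the set of distinct Laplacian eigenvalues, $L(X)=\sum_{\lambda\in\sigma(X)}\lambda E_\lambda$ the spectral decomposition with orthogonal eigenprojections $E_\lambda$, and $\sigma_u(X)=\{\lambda\in\sigma(X):E_\lambda\mathbf{e}_u\neq\mathbf{0}\}$ is the eigenvalue support of vertex $u$. Two vertices $u,v$ of $X$ are strongly cospectral if $E_\lambda\mathbf{e}_u=\pm E_\lambda\mathbf{e}_v$ for every $\lambda\in\sigma_u(X)$; in that case $\sigma^+_{u,v}(X)=\{\lambda:E_\lambda\mathbf{e}_u=E_\lambda\mathbf{e}_v\neq\mathbf{0}\}$ and $\sigma^-_{u,v}(X)=\{\lambda:E_\lambda\mathbf{e}_u=-E_\lambda\mathbf{e}_v\neq\mathbf{0}\}$.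 For a set $S$, $2\cdot S=\{2s:s\in S\}$. The blow-up $\uparrow^{n}G$ has vertex set $\mathbb{Z}_n\times V(G)$, with $(l,u)\sim(m,v)$ iff $u\sim v$ in $G$. *)

(* Defs.v *)
From HB Require Import structures.
From mathcomp Require Import all_boot all_order all_algebra.
Set Implicit Arguments. Unset Strict Implicit. Unset Printing Implicit Defensive.
Import Order.TTheory GRing.Theory Num.Theory.
Local Open Scope ring_scope.

(* A simple graph is a symmetric irreflexive relation e on a finite type V.
   Matrices are indexed by 'I_#|V| through enum_rank / enum_val. *)

Definition deg (V : finType) (e : rel V) (u : V) : nat := #|[set w | e u w]|.

Section Spectral.
Variable R : rcfType.

Definition lap (V : finType) (e : rel V) : 'M[R]_#|V| :=
  \matrix_(i, j) ((if i == j then (deg e (enum_val i))%:R else 0)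
                  - (if e (enum_val i) (enum_val j) then 1 else 0)).

Definition orthproj n (B : 'M[R]_n) : 'M[R]_n :=
  let C := row_base B in (C^T *m invmx (C *m C^T)) *m C.

Definition eigproj (V : finType) (e : rel V) (l : R) : 'M[R]_#|V| :=
  orthproj (eigenspace (lap e) l).

Definition Eu (V : finType) (e : rel V) (l : R) (u : V) : 'cV[R]_#|V| :=
  eigproj e l *m delta_mx (enum_rank u) 0.

Definition in_spec (V : finType) (e : rel V) (l : R) : bool := eigenvalue (lap e) l.

Definition in_supp (V : finType) (e : rel V) (u : V) (l : R) : bool :=
  in_spec e l && (Eu e l u != 0).

Definition strongly_cospectral (V : finType) (e : rel V) (u v : V) : Prop :=
  forall l, in_supp e u l -> Eu e l u = Eu e l v \/ Eu e l u = - Eu e l v.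

Definition in_sigma_plus (V : finType) (e : rel V) (u v : V) (l : R) : bool :=
  (Eu e l u == Eu e l v) && (Eu e l u != 0).
Definition in_sigma_minus (V : finType) (e : rel V) (u v : V) (l : R) : bool :=
  (Eu e l u == - Eu e l v) && (Eu e l u != 0).

End Spectral.

(* blow-up: vertex set Z_n x V (Z_n represented by 'I_n), (l,u)~(m,v) iff u~v *)
Definition blowup (n : nat) (V : finType) (e : rel V) : rel ('I_n * V)%type :=
  fun x y => e x.2 y.2.

Definition zero2 : 'I_2 := @Ordinal 2 0 isT.
Definition one2 : 'I_2 := @Ordinal 2 1 isT.
Arguments blowup n {V} e.

(* Main.v *)
Require Import Defs.
From HB Require Import structures.
From mathcomp Require Import all_boot all_order all_algebra.
From mathcomp Require Import ring lra.
Set Implicit Arguments. Unset Strict Implicit. Unset Printing Implicit Defensive.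
Import Order.TTheory GRing.Theory Num.Theory.
Local Open Scope ring_scope.

Section Orth.
Variable R : rcfType.

Lemma sqnorm_eq0 m (v : 'rV[R]_m) : v *m v^T = 0 -> v = 0.
Proof.
move=> h; have := congr1 (fun M : 'M[R]_1 => M 0 0) h; rewrite !mxE => /eqP.
rewrite psumr_eq0 => [/allP H|i _]; last by rewrite mxE -expr2 sqr_ge0.
apply/rowP=> i; rewrite mxE; have := H i (mem_index_enum _).
by rewrite mxE -expr2 sqrf_eq0 => /eqP.
Qed.

Lemma gram_unit m n (C : 'M[R]_(m, n)) : row_free C -> C *m C^T \in unitmx.
Proof.
move=> fC; rewrite -row_free_unit; apply: inj_row_free => v hv.
have : (v *m C) *m (v *m C)^T = 0 by rewrite trmx_mul mulmxA -(mulmxA v) hv mul0mx.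
move/sqnorm_eq0 => /eqP; rewrite mulmx_free_eq0 //; by move/eqP.
Qed.

Lemma orthproj_in n (B : 'M[R]_n) (w : 'cV_n) : ((orthproj B *m w)^T <= B)%MS.
Proof.
rewrite /orthproj -!mulmxA trmx_mul trmxK -(eq_row_base B); exact: submxMl.
Qed.

Lemma orthproj_perp n (B : 'M[R]_n) (w : 'cV_n) (r : 'rV_n) :
  (r <= B)%MS -> r *m (w - orthproj B *m w) = 0.
Proof.
rewrite -(eq_row_base B) => /submxP [a ->]; rewrite /orthproj.
have := row_base_free B; move: (row_base B) => C fC.
rewrite mulmxBr -!mulmxA (mulmxA C C^T) (mulmxA (C *m C^T)) mulmxV ?mul1mx ?subrr //.
exact/gram_unit.
Qed.

Lemma orthproj_uniq n (B : 'M[R]_n) (w z : 'cV_n) :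
  (z^T <= B)%MS -> (forall r : 'rV_n, (r <= B)%MS -> r *m (w - z) = 0) ->
  orthproj B *m w = z.
Proof.
move=> zB H; set d := orthproj B *m w - z.
have dB : (d^T <= B)%MS by rewrite /d linearB /= addmx_sub ?eqmx_opp ?orthproj_in.
have : d^T *m d = 0.
  have E : d = (w - z) - (w - orthproj B *m w) by rewrite /d opprB [RHS]addrC addrA subrK.
  by rewrite {2}E mulmxBr H // orthproj_perp // subrr.
move=> h; have /sqnorm_eq0 : d^T *m d^T^T = 0 by rewrite trmxK.
by move/eqP; rewrite trmx_eq0 subr_eq0 => /eqP.
Qed.
End Orth.

Section Gen.
Variable R : rcfType.
Variable T : finType.

Lemma sum_rank (F : 'I_#|T| -> R) : \sum_i F i = \sum_(x : T) F (enum_rank x).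
Proof. exact: (reindex enum_rank (onW_bij _ (enum_rank_bij T))). Qed.

Lemma rowP_rank (r s : 'rV[R]_#|T|) :
  (forall x, r 0 (enum_rank x) = s 0 (enum_rank x)) -> r = s.
Proof. by move=> H; apply/rowP => j; rewrite -[j]enum_valK H. Qed.

Lemma colP_rank (r s : 'cV[R]_#|T|) :
  (forall x, r (enum_rank x) 0 = s (enum_rank x) 0) -> r = s.
Proof. by move=> H; apply/colP => j; rewrite -[j]enum_valK H. Qed.

Lemma lapE (f : rel T) x y : lap R f (enum_rank x) (enum_rank y) =
  (if x == y then (deg f x)%:R else 0) - (if f x y then 1 else 0).
Proof. by rewrite mxE !enum_rankK (inj_eq enum_rank_inj). Qed.

Lemma lap_row (f : rel T) (r : 'rV[R]_#|T|) x :
  (r *m lap R f) 0 (enum_rank x) =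
  r 0 (enum_rank x) * (deg f x)%:R - \sum_(y | f y x) r 0 (enum_rank y).
Proof.
rewrite mxE sum_rank.
rewrite (eq_bigr (fun y : T => (r 0 (enum_rank y) * (if y == x then (deg f y)%:R else 0) - r 0 (enum_rank y) * (if f y x then 1 else 0) : R))); last by move=> y _; rewrite mxE !enum_rankK (inj_eq enum_rank_inj) mulrBr.
rewrite sumrB (bigD1 x) //= eqxx big1 => [|y /negbTE]; last by rewrite eq_sym => ->; rewrite mulr0.
rewrite addr0; congr (_ - _); rewrite [RHS]big_mkcond; apply: eq_bigr => y _; by case: (f y x); rewrite ?mulr1 ?mulr0.
Qed.

Lemma row_col_mul (r : 'rV[R]_#|T|) (c : 'cV[R]_#|T|) :
  (r *m c) 0 0 = \sum_x r 0 (enum_rank x) * c (enum_rank x) 0.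
Proof. by rewrite mxE sum_rank. Qed.

Lemma deltaE x y : (delta_mx (enum_rank x) 0 : 'cV[R]_#|T|) (enum_rank y) 0 = (y == x)%:R.
Proof. by rewrite mxE (inj_eq enum_rank_inj) eqxx andbT. Qed.

Lemma eig_row (f : rel T) (r : 'rV[R]_#|T|) mu :
  (r <= eigenspace (lap R f) mu)%MS <->
  (forall x, r 0 (enum_rank x) * (deg f x)%:R - \sum_(y | f y x) r 0 (enum_rank y)
              = mu * r 0 (enum_rank x)).
Proof.
split.
  by move/eigenspaceP => H x; rewrite -lap_row H mxE.
by move=> H; apply/eigenspaceP; apply: rowP_rank => x; rewrite lap_row H mxE.
Qed.

Lemma Eu_in (f : rel T) mu u : ((Eu f mu u)^T <= eigenspace (lap R f) mu)%MS.
Proof. exact: orthproj_in. Qed.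

End Gen.

Section Blow.
Variable R : rcfType.
Variable V : finType.
Variable e : rel V.
Variable n : nat.
Hypothesis hn : (0 < n)%N.

Local Notation N := (n%:R : R).

Lemma N_neq0 : N != 0.
Proof. by rewrite pnatr_eq0 -lt0n. Qed.

Lemma deg_blowup l u : deg (blowup n e) (l,u) = (n * deg e u)%N.
Proof.
rewrite /deg (_ : [set w | blowup n e (l,u) w] = setX [set: 'I_n] [set w | e u w]).
  by rewrite cardsX cardsT card_ord.
by apply/setP => [[a v]]; rewrite !inE.
Qed.

Lemma sum_pair (F : 'I_n * V -> R) : \sum_x F x = \sum_m \sum_v F (m,v).
Proof. by rewrite pair_bigA; apply: eq_bigr => [[]]. Qed.

Lemma sum_blow (F : 'I_n * V -> R) m w :
  \sum_(y | blowup n e y (m,w)) F y = \sum_a \sum_(v | e v w) F (a,v).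
Proof. by rewrite pair_big /=; apply: eq_big => [[a v]|[a v] _]. Qed.

Lemma sum_invN : \sum_(m < n) N^-1 = 1.
Proof. by rewrite sumr_const card_ord -[LHS]mulr_natr mulVf ?N_neq0. Qed.

Lemma sum_delta (F : 'I_n -> R) l :
  \sum_m F m * ((l == m)%:R - N^-1) = F l - N^-1 * \sum_m F m.
Proof.
under eq_bigr => m _ do rewrite mulrBr.
rewrite sumrB mulr_sumr; congr (_ - _); last by apply: eq_bigr => m _; rewrite mulrC.
rewrite (bigD1 l) //= eqxx mulr1 big1 ?addr0 // => m /negbTE; rewrite eq_sym => ->.
by rewrite mulr0.
Qed.

Lemma sum_delta1 (l : 'I_n) : \sum_(m < n) (((l == m)%:R - N^-1) : R) = 0.
Proof.
rewrite sumrB sum_invN (bigD1 l) //= eqxx big1 ?addr0 ?subrr // => m /negbTE.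
by rewrite eq_sym => ->.
Qed.


Definition zf lam l u (y : 'I_n * V) : R :=
  N^-1 * Eu e (lam / N) u (enum_rank y.2) 0
  + ((l == y.1)%:R - N^-1) * ((((n * deg e u)%:R : R) == lam)%:R * (y.2 == u)%:R).

Lemma Gp lam u w :
  let p := fun w => Eu e (lam / N) u (enum_rank w) 0 in
  p w * (deg e w)%:R - \sum_(v | e v w) p v = lam / N * p w.
Proof.
move=> p; have := (proj1 (eig_row _ _ _) (Eu_in e (lam / N) u)) w.
rewrite mxE; under eq_bigr => v _ do rewrite mxE.
exact: id.
Qed.

Lemma Eu_blowup lam l u y : Eu (blowup n e) lam (l,u) (enum_rank y) 0 = zf lam l u y.
Proof.
rewrite /Eu /eigproj.
suff -> : orthproj (eigenspace (lap R (blowup n e)) lam) *m delta_mx (enum_rank (l, u)) 0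
   = \col_i zf lam l u (enum_val i) by rewrite mxE enum_rankK.
set z := \col_i _.
have zE : forall y, z (enum_rank y) 0 = zf lam l u y by move=> y'; rewrite mxE enum_rankK.
clearbody z.
set p := fun w => Eu e (lam / N) u (enum_rank w) 0.
have Sz : forall v, \sum_a zf lam l u (a,v) = p v.
  move=> v; rewrite /zf /= big_split /= -!big_distrl /= sum_invN sum_delta1.
  by rewrite mul1r mul0r addr0.
have nN := N_neq0.
apply: orthproj_uniq.
  apply/eig_row => -[m w].
  under eq_bigr => x _ do rewrite mxE zE.
  rewrite mxE zE deg_blowup sum_blow exchange_big /=.
  under eq_bigr => v _ do rewrite Sz.
  have HS : \sum_(v | e v w) p v = p w * (deg e w)%:R - lam / N * p w.
    by rewrite -(Gp lam u w) /= -/p opprB addrC subrK.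
  rewrite HS /zf /= -/(p w).
  case: (eqVneq w u) => [->|wu]; last by rewrite natrM !mulr0 !addr0; field.
  case: (@eqP _ ((n * deg e u)%:R) lam) => [<-|_]; last by rewrite natrM !mul0r !mulr0 !addr0; field.
  by rewrite natrM; field.
move=> r /eig_row Hr.
set a := fun v => N^-1 * \sum_(m < n) r 0 (enum_rank (m,v)).
have Hr2 : forall m w, r 0 (enum_rank (m,w)) * (N * (deg e w)%:R) - N * \sum_(v | e v w) a v
    = lam * r 0 (enum_rank (m,w)).
  move=> m w; have := Hr (m,w); rewrite deg_blowup sum_blow natrM exchange_big /=.
  have -> : N * \sum_(v | e v w) a v = \sum_(v | e v w) \sum_(a' < n) r 0 (enum_rank (a',v)).
    by rewrite mulr_sumr; apply: eq_bigr => v _; rewrite /a mulrA mulfV // mul1r.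
  exact: id.
have Ha : forall w, a w * (deg e w)%:R - \sum_(v | e v w) a v = lam / N * a w.
  move=> w.
  have E : \sum_(m < n) (r 0 (enum_rank (m,w)) * (N * (deg e w)%:R) - N * \sum_(v | e v w) a v)
         = lam * \sum_(m < n) r 0 (enum_rank (m,w)).
    by rewrite [RHS]mulr_sumr; apply: eq_bigr => m _; exact: Hr2.
  rewrite sumrB -mulr_suml sumr_const card_ord -[(_ * _) *+ n]mulr_natr in E.
  set Sa := \sum_(v | e v w) a v in E *.
  set s := \sum_(m < n) r 0 (enum_rank (m,w)) in E.
  have E' : N * Sa * N = s * (N * (deg e w)%:R) - lam * s by rewrite -E; ring.
  have HSa : Sa = (s * (N * (deg e w)%:R) - lam * s) / (N * N) by rewrite -E'; field.
  by rewrite HSa /a -/s; field.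
set A : 'rV[R]_#|V| := \row_i a (enum_val i).
have AE : forall v, A 0 (enum_rank v) = a v by move=> v; rewrite mxE enum_rankK.
clearbody A.
have Ain : (A <= eigenspace (lap R e) (lam / N))%MS.
  by apply/eig_row => w; rewrite AE; under eq_bigr => v _ do rewrite AE; exact: Ha.
have Hperp := orthproj_perp (delta_mx (enum_rank u) 0) Ain.
have Pe : orthproj (eigenspace (lap R e) (lam / N)) *m delta_mx (enum_rank u) 0 = Eu e (lam/N) u by [].
rewrite Pe in Hperp.
have Hau : a u = \sum_v a v * p v.
  move: Hperp; rewrite mulmxBr => /eqP; rewrite subr_eq0 => /eqP /(congr1 (fun M : 'M[R]_1 => M 0 0)).
  rewrite !row_col_mul; under eq_bigr => v _ do rewrite deltaE AE.
  under [in X in _ = X -> _]eq_bigr => v _ do rewrite AE.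
  move=> <-; rewrite (bigD1 u) //= eqxx mulr1 big1 ?addr0 // => v /negbTE ->.
  by rewrite mulr0.
rewrite mulmxBr; apply/eqP; rewrite subr_eq0; apply/eqP; apply/matrixP => i j.
rewrite !ord1 !row_col_mul.
under eq_bigr => x _ do rewrite deltaE.
rewrite (bigD1 (l,u)) //= eqxx mulr1 big1 ?addr0; last by move=> x /negbTE ->; rewrite mulr0.
under [RHS]eq_bigr => x _ do rewrite zE.
rewrite sum_pair /zf /=.
set c := (((n * deg e u)%:R : R) == lam)%:R.
set P := fun v => Eu e (lam / N) u (enum_rank v) 0.
have C1 : forall m : 'I_n, \sum_v r 0 (enum_rank (m,v)) * (N^-1 * P v + ((l == m)%:R - N^-1) * (c * (v == u)%:R))
   = N^-1 * \sum_v r 0 (enum_rank (m,v)) * P v + r 0 (enum_rank (m,u)) * ((l == m)%:R - N^-1) * c.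
  move=> m; under eq_bigr => v _ do rewrite mulrDr.
  rewrite big_split /= mulr_sumr; congr (_ + _).
    by apply: eq_bigr => v _; rewrite mulrCA.
  rewrite (bigD1 u) //= eqxx big1 ?addr0; first by rewrite mulr1 mulrA.
  by move=> v /negbTE ->; rewrite !mulr0.
rewrite (eq_bigr _ (fun m _ => C1 m)) big_split /=.
have -> : \sum_(m < n) N^-1 * \sum_v r 0 (enum_rank (m,v)) * P v = \sum_v a v * P v.
  rewrite -mulr_sumr exchange_big /= mulr_sumr; apply: eq_bigr => v _.
  by rewrite /a -mulrA mulr_suml.
rewrite -mulr_suml sum_delta -/(a u) -Hau.
rewrite /c; case: (@eqP _ ((n * deg e u)%:R) lam) => [_|Hne].
  by rewrite /= mulr1 addrC subrK.
have HS : \sum_(v | e v u) a v = a u * (deg e u)%:R - lam / N * a u.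
  by rewrite -(Ha u) opprB addrC subrK.
have H := Hr2 l u; rewrite HS in H.
have H2 : (r 0 (enum_rank (l,u)) - a u) * (N * (deg e u)%:R - lam) =
   (r 0 (enum_rank (l,u)) * (N * (deg e u)%:R) - N * (a u * (deg e u)%:R - lam / N * a u))
   - lam * r 0 (enum_rank (l,u)) by field.
rewrite H subrr in H2; move/eqP: H2; rewrite mulf_eq0 => /orP [|].
  by rewrite subr_eq0 => /eqP ->; rewrite /= mulr0 addr0.
by rewrite subr_eq0 -natrM => /eqP.
Qed.

End Blow.

Section Supp.
Variable R : rcfType.
Variable T : finType.

Lemma in_suppE (f : rel T) u (l : R) : in_supp f u l = (Eu f l u != 0).
Proof.
rewrite /in_supp /in_spec; case E: (Eu f l u == 0); rewrite ?andbF ?andbT //=.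
apply/eigenvalueP; exists (Eu f l u)^T; first exact/eigenspaceP/Eu_in.
by rewrite trmx_eq0 E.
Qed.

Lemma Eu_neq0 (f : rel T) (l : R) u x : Eu f l u (enum_rank x) 0 != 0 -> Eu f l u != 0.
Proof. move=> H; apply/eqP => E0; move: H; rewrite E0 mxE eqxx. by []. Qed.
Lemma oppE m (c : 'cV[R]_m) i : (- c) i 0 = - c i 0.
Proof. by rewrite mxE. Qed.
End Supp.

Section Blow2.
Variable R : rcfType.
Variable V : finType.
Variable e : rel V.
Variable n : nat.
Hypothesis h2 : (1 < n)%N.

Lemma zf_diff (lam : R) (l a b : 'I_n) u w : zf e lam l u (a,w) - zf e lam l u (b,w) =
  ((l == a)%:R - (l == b)%:R) * ((((n * deg e u)%:R : R) == lam)%:R * (w == u)%:R).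
Proof. by rewrite /zf /=; ring. Qed.

Lemma partner (l : 'I_n) u m v : (l,u) != (m,v) ->
  strongly_cospectral R (blowup n e) (l,u) (m,v) -> v = u /\ forall b, b != l -> m = b.
Proof.
move=> xy SC.
have hn : (0 < n)%N by apply: ltnW.
set lam := ((n * deg e u)%:R : R).
have Dx : forall b, b != l -> zf e lam l u (l,u) - zf e lam l u (b,u) = 1.
  by move=> b bl; rewrite zf_diff eqxx eq_sym (negbTE bl) /lam eqxx /= subr0 eqxx !mul1r.
have [b0 b0l] : exists b : 'I_n, b != l.
  case: (eqVneq (nat_of_ord l) 0%N) => H.
    by exists (Ordinal h2); apply/eqP => /(congr1 val) /=; rewrite H.
  by exists (Ordinal hn); apply/eqP => /(congr1 val) /= E; rewrite -E in H.
have supp : in_supp (blowup n e) (l,u) lam.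
  rewrite in_suppE; apply/eqP => E0; have := Dx b0 b0l.
  by rewrite -!(Eu_blowup e hn) E0 !mxE subrr => /eqP; rewrite eq_sym oner_eq0.
have Dy : forall b, b != l -> zf e lam m v (l,u) - zf e lam m v (b,u) != 0.
  move=> b bl; apply/eqP => H0; have := Dx b bl; rewrite -!(Eu_blowup e hn).
  case: (SC lam supp) => ->; rewrite ?oppE !(Eu_blowup e hn).
    by rewrite H0 => /eqP; rewrite eq_sym oner_eq0.
  by rewrite opprK addrC -opprB H0 oppr0 => /eqP; rewrite eq_sym oner_eq0.
have vu : v = u.
  move: (Dy b0 b0l); rewrite zf_diff !mulf_eq0 !negb_or => /and3P [_ _].
  by rewrite pnatr_eq0 eqb0 negbK => /eqP.
split=> // b bl; move: (Dy b bl); rewrite zf_diff !mulf_eq0 !negb_or => /and3P [d1 _ _].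
case: (eqVneq m l) => [ml|ml].
  by move: xy; rewrite ml vu eqxx.
move: d1; rewrite (negbTE ml) /= sub0r oppr_eq0 pnatr_eq0 eqb0 negbK => /eqP.
by [].
Qed.

End Blow2.

Section Two.
Variable R : rcfType.
Variable V : finType.
Variable e : rel V.

Let h02 : (0 < 2)%N := isT.
Local Notation Ex lam u := (Eu (blowup 2 e) (lam : R) (zero2, u)).
Local Notation Ey lam u := (Eu (blowup 2 e) (lam : R) (one2, u)).

Lemma two_sum (lam : R) u (a : 'I_2) w :
  zf e lam zero2 u (a,w) + zf e lam one2 u (a,w) = Eu e (lam / 2%:R) u (enum_rank w) 0.
Proof.
rewrite /zf /=.
have -> : (one2 == a)%:R = 1 - (zero2 == a)%:R :> R.
  by case: a => [[|[|k]]] i //=; rewrite ?subr0 ?subrr.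
by field.
Qed.

Lemma two_diff (lam : R) u (a : 'I_2) w :
  zf e lam zero2 u (a,w) - zf e lam one2 u (a,w) =
  ((zero2 == a)%:R - (one2 == a)%:R) * ((((2 * deg e u)%:R : R) == lam)%:R * (w == u)%:R).
Proof. by rewrite /zf /=; ring. Qed.

Definition sw (a : 'I_2) := if a == zero2 then one2 else zero2.

Lemma swapE (lam : R) u (a : 'I_2) w : zf e lam one2 u (a,w) = zf e lam zero2 u (sw a, w).
Proof. by rewrite /zf /sw /=; case: a => [[|[|k]]] i. Qed.

Lemma F1 (lam : R) u : (Ex lam u == Ey lam u) = ((2 * deg e u)%:R != lam).
Proof.
case: (eqVneq ((2 * deg e u)%:R) lam) => [Hc|Hc].
  apply/eqP => E; have := two_diff lam u zero2 u.
  rewrite -!(Eu_blowup e h02) E subrr Hc eqxx /= => /eqP.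
  by rewrite !eqxx /= subr0 !mul1r eq_sym oner_eq0.
apply/eqP; apply: colP_rank => -[a w]; rewrite !(Eu_blowup e h02); apply/eqP.
by rewrite -subr_eq0 two_diff (negbTE Hc) /= !mul0r mulr0.
Qed.

Lemma F2 (lam : R) u : (Ex lam u == - Ey lam u) = (Eu e (lam / 2%:R) u == 0).
Proof.
apply/eqP/eqP => E.
  apply: colP_rank => w; rewrite -(two_sum lam u zero2 w) [RHS]mxE -!(Eu_blowup e h02) E oppE.
  by rewrite addNr.
apply: colP_rank => -[a w]; rewrite oppE !(Eu_blowup e h02); apply/eqP.
by rewrite -subr_eq0 opprK two_sum E mxE.
Qed.

Lemma F3 (lam : R) u : (Ex lam u != 0) = (Eu e (lam / 2%:R) u != 0) || ((2 * deg e u)%:R == lam).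
Proof.
suff -> : (Ex lam u == 0) = (Eu e (lam / 2%:R) u == 0) && ((2 * deg e u)%:R != lam).
  by rewrite negb_and negbK.
apply/eqP/andP => [E|[HP Hc]].
  have Ey0 : Ey lam u = 0.
    apply: colP_rank => -[a w]; rewrite (Eu_blowup e h02) swapE -(Eu_blowup e h02) E.
    by rewrite !mxE.
  by rewrite -F1 -F2 E Ey0 oppr0 eqxx.
rewrite -F1 in Hc; rewrite -F2 in HP.
move/eqP: Hc => Hc; move/eqP: HP => HP.
apply: colP_rank => x; rewrite [RHS]mxE.
have h1 : Ex lam u (enum_rank x) 0 = Ey lam u (enum_rank x) 0 by rewrite Hc.
have h2 : Ex lam u (enum_rank x) 0 = - Ey lam u (enum_rank x) 0 by rewrite {1}HP oppE.
lra.
Qed.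

End Two.

Lemma half_nat (R : rcfType) (d : nat) : ((2 * d)%:R : R) / 2%:R = d%:R.
Proof. by rewrite natrM mulrC mulKf // pnatr_eq0. Qed.

Theorem theorem2 (R : rcfType) (V : finType) (e : rel V)
    (e_sym : symmetric e) (e_irr : irreflexive e) :
  (* (1) *)
  (forall n : nat, (3 <= n)%N -> forall x y : ('I_n * V)%type,
      x != y -> ~ strongly_cospectral R (blowup n e) x y)
  /\
  (* (2) *)
  (forall u : V,
     (strongly_cospectral R (blowup 2 e) (zero2, u) (one2, u)
        <-> ~~ in_supp e u ((deg e u)%:R : R))
     /\ (strongly_cospectral R (blowup 2 e) (zero2, u) (one2, u) ->
          (forall l : R, in_sigma_plus (blowup 2 e) (zero2, u) (one2, u) l
                 <-> exists2 m : R, in_supp e u m & l = 2 * m)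
          /\ (forall l : R, in_sigma_minus (blowup 2 e) (zero2, u) (one2, u) l
                 <-> l = 2 * (deg e u)%:R))
     /\ (forall y : ('I_2 * V)%type,
           y != (zero2, u) -> strongly_cospectral R (blowup 2 e) (zero2, u) y ->
           y = (one2, u))).
Proof.
split.
  move=> n n3 [l u] [m v] xy SC.
  have h2 : (1 < n)%N by apply: leq_trans n3.
  have [vu Hb] := partner h2 xy SC.
  have h0 : (0 < n)%N by apply: ltnW.
  pose i0 := Ordinal h0; pose i1 := Ordinal h2; pose i2 := Ordinal n3.
  have d01 : i0 != i1 by []. have d02 : i0 != i2 by []. have d12 : i1 != i2 by [].
  case: (eqVneq i0 l) => [e0|n0].
    have n1 : i1 != l by rewrite -e0 eq_sym.
    have n2 : i2 != l by rewrite -e0 eq_sym.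
    by move: d12; rewrite -(Hb _ n1) -(Hb _ n2) eqxx.
  case: (eqVneq i1 l) => [e1|n1].
    have n2 : i2 != l by rewrite -e1 eq_sym.
    by move: d02; rewrite -(Hb _ n0) -(Hb _ n2) eqxx.
  by move: d01; rewrite -(Hb _ n0) -(Hb _ n1) eqxx.
move=> u.
have SCiff : strongly_cospectral R (blowup 2 e) (zero2, u) (one2, u) <->
             Eu e ((deg e u)%:R : R) u == 0.
  split.
    move=> SC; have := SC ((2 * deg e u)%:R).
    rewrite in_suppE F3 eqxx orbT => /(_ isT) [/eqP|/eqP].
      by rewrite F1 eqxx.
    by rewrite F2 half_nat.
  move=> H lam; rewrite in_suppE F3 => _.
  case: (eqVneq ((2 * deg e u)%:R : R) lam) => [<-|Hc].
    by right; apply/eqP; rewrite F2 half_nat.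
  by left; apply/eqP; rewrite F1 Hc.
split; first by rewrite in_suppE negbK.
split.
  move=> SC; have Hd := (proj1 SCiff) SC; split => lam.
    rewrite /in_sigma_plus F1 F3; split.
      move/andP => [Hc]; rewrite (negbTE Hc) orbF => HP.
      by exists (lam / 2%:R); [rewrite in_suppE | field].
    move=> [m Hm ->]; rewrite in_suppE in Hm.
    have -> : 2 * m / 2%:R = m by field.
    rewrite Hm /= andbT; apply/eqP => Hc.
    have Hm' : m = (deg e u)%:R by rewrite -(half_nat R (deg e u)) Hc; field.
    by move: Hm; rewrite Hm' Hd.
  rewrite /in_sigma_minus F2 F3; split.
    move/andP => [/eqP HP]; rewrite HP eqxx /= => /eqP <-.
    by rewrite natrM.
  move=> ->; rewrite -natrM half_nat Hd eqxx orbT.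
  by [].
move=> [m v] ne SC.
rewrite eq_sym in ne; have [vu Hb] := partner (isT : (1 < 2)%N) ne SC.
by rewrite vu (Hb one2).
Qed.
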